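(* Let $k\ge2$ and $G=BS(1,k)\cong\mathbb{Z}[1/k]\rtimes\mathbb{Z}$. Every conjugacy geodesic $w$ for a conjugacy class $[(x,m)]$ with $m>0$ is, up to a cyclic permutation, of the form $a^{x_0}ta^{x_1}t\cdots a^{x_{m-1}}t$ for some $x_0,\ldots,x_{m-1}\in\mathbb{Z}$.
   Context: $BS(1,k)=\langle a,t\mid tat^{-1}=a^k\rangle$ is identified with $\mathbb{Z}[1/k]\rtimes\mathbb{Z}$ via $a\mapsto(1,0)$, $t\mapsto(0,1)$, the generator of $\mathbb{Z}$ acting by multiplication by $k$; elements are pairs $(x,m)$. $a^x$ denotes $|x|$ copies of $a$ or $a^{-1}$ according to the sign of $x$. Word length is with respect to $\{a,t\}$. A word $w$ is a conjugacy geodesic for the class $[g]$ if it is a geodesic word representing an element of $[g]$ of minimal length among all elements of $[g]$. *)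

(* Defs.v *)
(* BS(1,k) modelled as Z[1/k] ⋊ Z inside rat * int. *)
From mathcomp Require Import all_boot all_order all_algebra.
Set Implicit Arguments. Unset Strict Implicit. Unset Printing Implicit Defensive.
Import Order.TTheory GRing.Theory Num.Theory.
Local Open Scope ring_scope.

Inductive letter := A | Ai | T | Ti.
Definition word := seq letter.

(* Elements of Z[1/k] ⋊ Z are pairs (x, m); the generator of Z acts by
   multiplication by k: (x,m)(y,n) = (x + k^m y, m + n). *)
Definition bs_mul (k : nat) (g h : rat * int) : rat * int :=
  (g.1 + (k%:R : rat) ^ g.2 * h.1, g.2 + h.2).
Definition bs_inv (k : nat) (g : rat * int) : rat * int :=
  (- ((k%:R : rat) ^ (- g.2) * g.1), - g.2).
Definition bs_one : rat * int := (0, 0).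

Definition eval_letter (k : nat) (l : letter) : rat * int :=
  match l with
  | A => (1, 0) | Ai => (-1, 0) | T => (0, 1) | Ti => (0, -1)
  end.

Definition eval_word (k : nat) (w : word) : rat * int :=
  foldr (fun l g => bs_mul k (eval_letter k l) g) bs_one w.

Definition inZk (k : nat) (x : rat) : Prop :=
  exists (z : int) (n : nat), x = z%:~R / (k%:R ^+ n).

(* h is conjugate in G to g; words generate G so conjugators are words. *)
Definition conjugate (k : nat) (g h : rat * int) : Prop :=
  exists u : word, bs_mul k (bs_mul k (eval_word k u) g) (bs_inv k (eval_word k u)) = h.

Definition geodesic (k : nat) (w : word) : Prop :=
  forall u : word, eval_word k u = eval_word k w -> (size w <= size u)%N.

Definition conj_geodesic (k : nat) (g : rat * int) (w : word) : Prop :=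
  [/\ geodesic k w, conjugate k g (eval_word k w) &
      forall u : word, conjugate k g (eval_word k u) -> (size w <= size u)%N].

Definition apow (x : int) : word := nseq `|x|%N (if (0 <= x) then A else Ai).

Definition normal_form (xs : seq int) : word :=
  flatten [seq apow x ++ [:: T] | x <- xs].

(* Main.v *)
Require Import Defs.
From mathcomp Require Import all_boot all_order all_algebra.
From HB Require Import structures.
From mathcomp Require Import zify ring.
Import Order.TTheory GRing.Theory Num.Theory.
Local Open Scope ring_scope.

Lemma kunit {k : nat} : (2 <= k)%N -> (k%:R : rat) \is a GRing.unit.
Proof. move=> hk; rewrite unitfE pnatr_eq0; lia. Qed.

Lemma bs_mulA {k : nat} (hk : (2 <= k)%N) a b c :
  bs_mul k a (bs_mul k b c) = bs_mul k (bs_mul k a b) c.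
Proof.
case: a b c => [a1 a2] [b1 b2] [c1 c2]; rewrite /bs_mul /=.
by rewrite (exprzDr (kunit hk)) addrA mulrDr mulrA addrA.
Qed.

Lemma bs_inv_mul {k : nat} (hk : (2 <= k)%N) a b :
  bs_inv k (bs_mul k a b) = bs_mul k (bs_inv k b) (bs_inv k a).
Proof.
case: a b => [a1 a2] [b1 b2]; rewrite /bs_mul /bs_inv /=.
have ku := kunit hk.
congr pair; last by ring.
rewrite opprD (exprzDr ku) mulrDr.
have -> : (k%:R:rat) ^ (- a2) * k%:R ^ (- b2) * (k%:R ^ a2 * b1) = k%:R ^ (- b2) * b1.
  rewrite -mulrA mulrCA [X in _ * X]mulrA -(exprzDr ku).
  by rewrite addNr expr0z mul1r.
rewrite opprD; ring.
Qed.

Lemma bs_mulV {k : nat} (hk : (2 <= k)%N) g : bs_mul k g (bs_inv k g) = bs_one.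
Proof.
case: g => [g1 g2]; rewrite /bs_mul /bs_inv /bs_one /=.
rewrite mulrN mulrA -(exprzDr (kunit hk)) subrr expr0z mul1r subrr.
by [].
Qed.

Lemma bs_mulr1 (k : nat) g : bs_mul k g bs_one = g.
Proof. by case: g => g1 g2; rewrite /bs_mul /bs_one /= mulr0 !addr0. Qed.

Lemma bs_mul1r (k : nat) g : bs_mul k bs_one g = g.
Proof. by case: g => g1 g2; rewrite /bs_mul /bs_one /= expr0z mul1r !add0r. Qed.

Lemma eval_cat {k : nat} (hk : (2 <= k)%N) u v :
  eval_word k (u ++ v) = bs_mul k (eval_word k u) (eval_word k v).
Proof.
elim: u => [|l u IH] /=; first by rewrite bs_mul1r.
by rewrite IH bs_mulA.
Qed.

Lemma conj_trans {k : nat} (hk : (2 <= k)%N) g h h' :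
  conjugate k g h -> conjugate k h h' -> conjugate k g h'.
Proof.
move=> [U <-] [V <-]; exists (V ++ U).
rewrite eval_cat // bs_inv_mul // !bs_mulA //.
Qed.

Lemma conj_rot {k : nat} (hk : (2 <= k)%N) p s :
  conjugate k (eval_word k (p ++ s)) (eval_word k (s ++ p)).
Proof.
exists s; rewrite !eval_cat // !bs_mulA // -(bs_mulA hk _ _ (bs_inv k _)).
by rewrite bs_mulV // bs_mulr1.
Qed.

Fixpoint nA (w : word) : nat := match w with [::] => 0 | A :: w => (nA w).+1 | _ :: w => nA w end.
Fixpoint nAi (w : word) : nat := match w with [::] => 0 | Ai :: w => (nAi w).+1 | _ :: w => nAi w end.
Fixpoint nT (w : word) : nat := match w with [::] => 0 | T :: w => (nT w).+1 | _ :: w => nT w end.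
Fixpoint nTi (w : word) : nat := match w with [::] => 0 | Ti :: w => (nTi w).+1 | _ :: w => nTi w end.

Lemma evA {k : nat} w : eval_word k (A :: w) = (1 + (eval_word k w).1, (eval_word k w).2).
Proof. by rewrite /= /bs_mul /= expr0z mul1r add0r. Qed.
Lemma evAi {k : nat} w : eval_word k (Ai :: w) = (-1 + (eval_word k w).1, (eval_word k w).2).
Proof. by rewrite /= /bs_mul /= expr0z mul1r add0r. Qed.
Lemma evT {k : nat} w : eval_word k (T :: w) = (k%:R * (eval_word k w).1, 1 + (eval_word k w).2).
Proof. by rewrite /= /bs_mul /= expr1z add0r. Qed.
Lemma evTi {k : nat} w : eval_word k (Ti :: w) = ((k%:R)^-1 * (eval_word k w).1, -1 + (eval_word k w).2).
Proof. by rewrite /= /bs_mul /= exprN1 add0r. Qed.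

Lemma ev_ht {k : nat} w : (eval_word k w).2 = (nT w)%:Z - (nTi w)%:Z.
Proof.
elim: w => [|l w IH] //.
case: l; rewrite ?evA ?evAi ?evT ?evTi /= IH; lia.
Qed.

Lemma size_count (w : word) : size w =
  (nA w + nAi w + nT w + nTi w)%N.
Proof. elim: w => [|l w IH] //; case: l => /=.
all: lia. Qed.

Definition Zk (k : nat) (y : rat) := exists (z : int) (e : nat), y * (k%:R) ^+ e = z%:~R.

Lemma Zk_ev {k : nat} (hk : (2 <= k)%N) w : Zk k (eval_word k w).1.
Proof.
have ku := kunit hk.
elim: w => [|l w [z [e IH]]]; first by exists 0, 0%N; rewrite /= mul0r.
case: l.
- exists (z + (k ^ e)%N%:Z), e; rewrite evA /= mulrDl IH mul1r intrD -pmulrn natrX.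
  by rewrite addrC.
- exists (z - (k ^ e)%N%:Z), e; rewrite evAi /= mulrDl IH intrB -pmulrn natrX mulN1r.
  by rewrite addrC.
- exists (z * k%:Z), e; rewrite evT /= -mulrA IH intrM mulrC; done.
- exists z, e.+1; rewrite evTi /= exprS -IH; field.
  by rewrite pnatr_eq0; lia.
Qed.

Definition upd (c : seq int) (r : nat) (d : int) := set_nth 0 c r (nth 0 c r + d).

Fixpoint Vc (k : nat) (c : seq int) : rat :=
  match c with [::] => 0 | x :: c' => x%:~R + k%:R * Vc k c' end.

Lemma Vc_upd (k : nat) c r d : (r < size c)%N -> Vc k (upd c r d) = Vc k c + d%:~R * (k%:R) ^+ r.
Proof.
elim: c r => [|x c IH] [|r] //= hr.
- by rewrite intrD expr0 mulr1; ring.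
- rewrite /upd /= in IH *; rewrite IH // exprS; ring.
Qed.

Lemma size_upd c r d : (r < size c)%N -> size (upd c r d) = size c.
Proof. by move=> hr; rewrite /upd size_set_nth (maxn_idPr hr). Qed.

Definition absum (c : seq int) := sumn (map absz c).

Lemma absz_tri (x d : int) : (absz (x + d)%R <= absz x + absz d)%N.
Proof. by have := ler_normD x d; rewrite -!abszE -PoszD lez_nat. Qed.

Lemma absum_upd c r d : (r < size c)%N -> (absum (upd c r d) <= absum c + `|d|)%N.
Proof.
rewrite /absum /upd.
elim: c r => [|x c IH] [|r] //= hr.
- by rewrite addnAC leq_add2r absz_tri.
- by rewrite -addnA leq_add2l IH.
Qed.

Fixpoint coef (n r : nat) (w : word) : seq int :=
  match w with
  | [::] => nseq n 0
  | A :: w' => upd (coef n r w') r 1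
  | Ai :: w' => upd (coef n r w') r (-1)
  | T :: w' => coef n (if r.+1 == n then 0%N else r.+1) w'
  | Ti :: w' => coef n (if r == 0%N then n.-1 else r.-1) w'
  end.

Lemma size_coef n w : forall r, (0 < n)%N -> (r < n)%N -> size (coef n r w) = n.
Proof.
elim: w => [|l w IH] r hn hr /=; first by rewrite size_nseq.
case: l.
- by rewrite size_upd IH.
- by rewrite size_upd IH.
- apply: IH => //; case: eqP => //; lia.
- apply: IH => //; case: eqP; lia.
Qed.

Lemma absum_coef n w : forall r, (0 < n)%N -> (r < n)%N -> (absum (coef n r w) <= nA w + nAi w)%N.
Proof.
elim: w => [|l w IH] r hn hr /=.
  by rewrite /absum; elim: n {hn hr} => //.
case: l.
- have h1 : (absum (upd (coef n r w) r 1) <= absum (coef n r w) + absz 1)%N by apply: absum_upd; rewrite size_coef.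
  have e1 : absz 1 = 1%N by [].
  have := IH r hn hr; move: h1; rewrite e1; lia.
- have h1 : (absum (upd (coef n r w) r (-1)%R) <= absum (coef n r w) + absz (-1)%R)%N by apply: absum_upd; rewrite size_coef.
  have e1 : absz (-1)%R = 1%N by [].
  have := IH r hn hr; move: h1; rewrite e1; lia.
- apply: IH => //; case: eqP => //; lia.
- apply: IH => //; case: eqP; lia.
Qed.

Definition Sk (k n : nat) (y : rat) :=
  exists (z : int) (e : nat), y * (k%:R) ^+ e = ((k%:R) ^+ n - 1) * z%:~R.

Lemma S0 k n : Sk k n 0.
Proof. by exists 0, 0%N; rewrite mul0r mulr0. Qed.

Lemma SD k n a b : Sk k n a -> Sk k n b -> Sk k n (a + b).
Proof.
move=> [z1 [e1 h1]] [z2 [e2 h2]].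
exists (z1 * (k ^ e2)%N%:Z + z2 * (k ^ e1)%N%:Z), (e1 + e2)%N.
have -> : (a + b) * (k%:R) ^+ (e1 + e2) = (a * (k%:R) ^+ e1) * (k%:R) ^+ e2 + (b * (k%:R) ^+ e2) * (k%:R) ^+ e1.
  by rewrite exprD; ring.
rewrite h1 h2 intrD !intrM -!pmulrn !natrX; ring.
Qed.

Lemma SN k n a : Sk k n a -> Sk k n (- a).
Proof. move=> [z [e h]]; exists (- z), e; rewrite mulNr h intrN; ring. Qed.

Lemma S_Zk k n e : Zk k e -> Sk k n (((k%:R) ^+ n - 1) * e).
Proof. move=> [z [f h]]; exists z, f; by rewrite -mulrA h. Qed.

Lemma S_divk k n a : (2 <= k)%N -> Sk k n a -> Sk k n ((k%:R)^-1 * a).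
Proof.
move=> hk [z [e h]]; exists z, e.+1; rewrite -h exprS; field.
by rewrite pnatr_eq0; lia.
Qed.

Lemma Vc_nseq k n : Vc k (nseq n 0) = 0.
Proof. by elim: n => //= n ->; rewrite mulr0 addr0. Qed.

Lemma S_coef {k : nat} (hk : (2 <= k)%N) n w : forall r, (0 < n)%N -> (r < n)%N ->
  Sk k n ((k%:R) ^+ r * (eval_word k w).1 - Vc k (coef n r w)).
Proof.
have knz : (k%:R : rat) != 0 by rewrite pnatr_eq0; lia.
elim: w => [|l w IH] r hn hr.
  by rewrite /= Vc_nseq mulr0 subr0; apply: S0.
case: l.
- rewrite evA /= Vc_upd ?size_coef //.
  have -> : forall (K e V : rat), K * (1 + e) - (V + 1%:~R * K) = K * e - V by move=> *; ring.
  exact: IH.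
- rewrite evAi /= Vc_upd ?size_coef //.
  have -> : forall (K e V : rat), K * (-1 + e) - (V + (-1)%:~R * K) = K * e - V by move=> *; ring.
  exact: IH.
- rewrite evT /=; case: eqP => hrn.
  + have -> : (k%:R : rat) ^+ r * (k%:R * (eval_word k w).1) - Vc k (coef n 0 w)
       = ((k%:R) ^+ 0 * (eval_word k w).1 - Vc k (coef n 0 w)) + ((k%:R)^+n - 1) * (eval_word k w).1.
      by rewrite -hrn exprS expr0; ring.
    by apply: SD; [apply: IH | apply: S_Zk; apply: Zk_ev].
  + have -> : (k%:R : rat) ^+ r * (k%:R * (eval_word k w).1) = (k%:R)^+ r.+1 * (eval_word k w).1.
      by rewrite exprS; ring.
    apply: IH => //; lia.
- rewrite evTi /=; case: r hr => [|r] hr /=.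
  + have -> : (k%:R : rat) ^+ 0 * ((k%:R)^-1 * (eval_word k w).1) - Vc k (coef n n.-1 w)
       = ((k%:R) ^+ n.-1 * (eval_word k w).1 - Vc k (coef n n.-1 w)) + (k%:R)^-1 * (- (((k%:R)^+n - 1) * (eval_word k w).1)).
      by case: n hn {IH hr} => // n _ /=; rewrite expr0 exprS; field.
    apply: SD; first by apply: IH => //; lia.
    by apply: S_divk => //; apply: SN; apply: S_Zk; apply: Zk_ev.
  + have -> : (k%:R : rat) ^+ r.+1 * ((k%:R)^-1 * (eval_word k w).1) = (k%:R)^+ r * (eval_word k w).1.
      by rewrite exprS; field.
    apply: IH => //; lia.
Qed.

Lemma ev_nseqA {k : nat} n W :
  eval_word k (nseq n A ++ W) = (n%:R + (eval_word k W).1, (eval_word k W).2).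
Proof.
elim: n => [|n IH]; first by rewrite /= add0r; case: (eval_word k W).
by rewrite [nseq _ _ ++ _]/= evA IH /= mulrS addrA.
Qed.

Lemma ev_nseqAi {k : nat} n W :
  eval_word k (nseq n Ai ++ W) = (- n%:R + (eval_word k W).1, (eval_word k W).2).
Proof.
elim: n => [|n IH]; first by rewrite /= oppr0 add0r; case: (eval_word k W).
by rewrite [nseq _ _ ++ _]/= evAi IH /= mulrS opprD addrA.
Qed.

Lemma ev_apow {k : nat} z W :
  eval_word k (apow z ++ W) = (z%:~R + (eval_word k W).1, (eval_word k W).2).
Proof.
case: z => n; rewrite /apow.
- have -> : absz (Posz n) = n by [].
  have -> : (0 <= Posz n) = true by [].
  by rewrite ev_nseqA.
- have -> : absz (Negz n) = n.+1 by [].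
  have -> : (0 <= Negz n) = false by [].
  by rewrite ev_nseqAi NegzE intrN -pmulrn.
Qed.

Lemma ev_nseqTi {k : nat} e W :
  eval_word k (nseq e Ti ++ W) = ((eval_word k W).1 / (k%:R) ^+ e, (eval_word k W).2 - e%:Z).
Proof.
elim: e => [|e IH]; first by rewrite /= expr0 divr1 subr0; case: (eval_word k W).
rewrite [nseq _ _ ++ _]/= evTi IH /= exprS invfM; congr pair; first by ring.
lia.
Qed.

Lemma ev_nseqT {k : nat} e : eval_word k (nseq e T) = (0, e%:Z).
Proof. by elim: e => [|e IH] //; rewrite [nseq _ _]/= evT IH /= mulr0; congr pair; lia. Qed.

Lemma conj_S {k : nat} (hk : (2 <= k)%N) (n : nat) y y' :
  Sk k n (y - y') -> conjugate k (y, n%:Z) (y', n%:Z).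
Proof.
move=> [z [e h]].
have ku := kunit hk.
have knz : (k%:R : rat) != 0 by rewrite pnatr_eq0; lia.
exists (nseq e Ti ++ apow z ++ nseq e T).
rewrite ev_nseqTi ev_apow ev_nseqT /= addr0 subrr.
have hy' : y' = y - ((k%:R) ^+ n - 1) * z%:~R / (k%:R) ^+ e.
  by rewrite -h mulrK ?unitrX //; ring.
rewrite /bs_mul /bs_inv /= ?oppr0 ?expr0z ?add0r ?subr0 ?mul1r -exprnP hy'.
congr pair; ring.
Qed.

Lemma conj_ht {k : nat} g h : conjugate k g h -> h.2 = g.2.
Proof. by move=> [U <-]; rewrite /= addrC addrA addNr add0r. Qed.

Lemma nf_cons x c : normal_form (x :: c) = apow x ++ T :: normal_form c.
Proof. by rewrite /normal_form /= -catA. Qed.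

Lemma ev_nf {k : nat} (hk : (2 <= k)%N) c :
  eval_word k (normal_form c) = (Vc k c, (size c)%:Z).
Proof.
elim: c => [|x c IH] //=.
rewrite nf_cons ev_apow evT IH /=; congr pair; lia.
Qed.

Lemma size_nf c : size (normal_form c) = (size c + absum c)%N.
Proof.
elim: c => [|x c IH] //=.
rewrite nf_cons /absum /= in IH *; rewrite size_cat /= IH /apow size_nseq; lia.
Qed.

Definition blocks (bs : seq word) : word := flatten [seq b ++ [:: T] | b <- bs].
Definition aonly (b : word) : bool := (nT b == 0%N) && (nTi b == 0%N).
Definition asum (b : word) : int := (nA b)%:Z - (nAi b)%:Z.

Lemma blocks_cons b bs : blocks (b :: bs) = b ++ T :: blocks bs.
Proof. by rewrite /blocks /= -catA. Qed.

Lemma nT_cat u v : nT (u ++ v) = (nT u + nT v)%N.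
Proof. by elim: u => [|l u IH] //; case: l => /=; rewrite IH. Qed.
Lemma nTi_cat u v : nTi (u ++ v) = (nTi u + nTi v)%N.
Proof. by elim: u => [|l u IH] //; case: l => /=; rewrite IH. Qed.

Lemma split_T w : (0 < nT w)%N -> exists p s, w = p ++ T :: s.
Proof.
elim: w => [|l w IH] //=; case: l => /= h.
- by have [p [s ->]] := IH h; exists (A :: p), s.
- by have [p [s ->]] := IH h; exists (Ai :: p), s.
- by exists [::], w.
- by have [p [s ->]] := IH h; exists (Ti :: p), s.
Qed.

Lemma decomp v : nTi v = 0%N -> exists b0 bs, v ++ [:: T] = blocks (b0 :: bs) /\ all aonly (b0 :: bs).
Proof.
elim: v => [|l v IH] /=.
  by move=> _; exists [::], [::].
case: l => //= h.
- have [b0 [bs [-> /andP [hb hbs]]]] := IH h.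
  exists (A :: b0), bs; rewrite !blocks_cons /=; split => //.
  by apply/andP; split.
- have [b0 [bs [-> /andP [hb hbs]]]] := IH h.
  exists (Ai :: b0), bs; rewrite !blocks_cons /=; split => //.
  by apply/andP; split.
- have [b0 [bs [-> hbs]]] := IH h.
  by exists [::], (b0 :: bs); rewrite !blocks_cons /=; split.
Qed.

Lemma ev_aonly {k : nat} b W : aonly b ->
  eval_word k (b ++ W) = ((asum b)%:~R + (eval_word k W).1, (eval_word k W).2).
Proof.
rewrite /aonly /asum; elim: b => [|l b IH].
  by move=> _; rewrite /= add0r; case: (eval_word k W).
case: l => h; rewrite cat_cons; try by case/andP: h.
- rewrite evA IH //; congr pair; rewrite /= !intrD; ring.
- rewrite evAi IH //; congr pair; rewrite /= !intrD !intrN; ring.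
Qed.

Lemma ev_blocks {k : nat} bs : all aonly bs ->
  eval_word k (blocks bs) = eval_word k (normal_form (map asum bs)).
Proof.
elim: bs => [|b bs IH] //= /andP [hb hbs].
by rewrite blocks_cons nf_cons ev_aonly // ev_apow !evT IH.
Qed.

Lemma nT_blocks bs : all aonly bs -> nT (blocks bs) = size bs.
Proof.
elim: bs => [|b bs IH] //= /andP [hb hbs].
rewrite blocks_cons nT_cat /= IH //; move: hb; rewrite /aonly => /andP [/eqP -> _] //.
Qed.

Lemma onlyA b : aonly b -> nAi b = 0%N -> b = nseq (size b) A.
Proof.
rewrite /aonly; elim: b => [|l b IH] //=; case: l => //= h1 h2; try by case/andP: h1.
by rewrite -IH.
Qed.

Lemma onlyAi b : aonly b -> nA b = 0%N -> b = nseq (size b) Ai.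
Proof.
rewrite /aonly; elim: b => [|l b IH] //=; case: l => //= h1 h2; try by case/andP: h1.
by rewrite -IH.
Qed.

Lemma size_aonly b : aonly b -> size b = (nA b + nAi b)%N.
Proof.
move=> /andP [/eqP h1 /eqP h2]; rewrite size_count h1 h2; lia.
Qed.

Lemma asum_le b : aonly b -> (absz (asum b) <= size b)%N.
Proof.
move=> hb; rewrite size_aonly // /asum.
case: (leqP (nAi b) (nA b)) => h.
- rewrite distnEl //; lia.
- rewrite distnEr; lia.
Qed.

Lemma block_eq b : aonly b -> absz (asum b) = size b -> b = apow (asum b).
Proof.
move=> hb; rewrite size_aonly // /asum.
case: (leqP (nAi b) (nA b)) => h.
- rewrite distnEl // => e.
  have h0 : nAi b = 0%N by lia.
  rewrite h0 /apow.
  have -> : absz (Posz (nA b) - Posz 0) = nA b by rewrite subr0.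
  have -> : (0 <= Posz (nA b) - Posz 0) = true by rewrite subr0.
  by rewrite /= {1}(onlyA b hb h0) size_aonly // h0 addn0.
- rewrite distnEr; last by lia.
  move=> e; have h0 : nA b = 0%N by lia.
  rewrite h0 sub0r /apow.
  have [j hj] : exists j, nAi b = j.+1 by case: (nAi b) h => [|j]; [rewrite ltn0 | exists j].
  rewrite hj.
  have -> : absz (- Posz j.+1) = j.+1 by [].
  have -> : (0 <= - Posz j.+1) = false by [].
  by rewrite /= {1}(onlyAi b hb h0) size_aonly // h0 hj.
Qed.

Lemma blocks_nf bs : all aonly bs ->
  (size (normal_form (map asum bs)) <= size (blocks bs))%N /\
  ((size (blocks bs) <= size (normal_form (map asum bs)))%N -> blocks bs = normal_form (map asum bs)).
Proof.
elim: bs => [|b bs IH] //= /andP [hb hbs].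
have [IH1 IH2] := IH hbs.
have hle := asum_le b hb.
rewrite blocks_cons nf_cons !size_cat /= /apow size_nseq.
split; first by lia.
move=> hs.
rewrite IH2; last by lia.
by rewrite {1}(block_eq b hb); last by lia.
Qed.

Theorem proposition4p2 (k : nat) (hk : (2 <= k)%N) (x : rat) (m : int)
  (hx : inZk k x) (hm : 0 < m) (w : word) :
  conj_geodesic k (x, m) w ->
  exists (i : nat) (xs : seq int),
    (size xs)%:Z = m /\ rot i w = normal_form xs.
Proof.
case: m hm => [n|n] // hm [_ hc hmin].
have hn : (0 < n)%N by [].
have hw2 : (eval_word k w).2 = n%:Z by rewrite (conj_ht _ _ hc).
have hts : ((nT w)%:Z - (nTi w)%:Z = n%:Z) by rewrite -(ev_ht (k:=k)).
set c := coef n 0 w.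
have hcs : size c = n by rewrite size_coef.
have hS := S_coef hk n w 0 hn hn.
rewrite expr0 mul1r -/c in hS.
have hcu : conjugate k (x, Posz n) (eval_word k (normal_form c)).
  apply: (conj_trans hk _ _ _ hc); rewrite ev_nf // hcs.
  rewrite [eval_word k w]surjective_pairing hw2; exact: (conj_S hk n _ _ hS).
have := hmin _ hcu; rewrite size_nf hcs size_count.
have := absum_coef n w 0 hn hn; rewrite -/c => ha hsz.
have hTi : nTi w = 0%N by lia.
have hT : nT w = n by lia.
have [p [s hps]] : exists p s, w = p ++ T :: s by apply: split_T; rewrite hT.
have hw : w = rcons p T ++ s by rewrite cat_rcons.
set w' := s ++ rcons p T.
have hrot : rot (size (rcons p T)) w = w' by rewrite hw rot_size_cat.
have hcw' : conjugate k (x, Posz n) (eval_word k w').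
  by apply: (conj_trans hk _ _ _ hc); rewrite hw; apply: conj_rot.
have hv : nTi (s ++ p) = 0%N by move: hTi; rewrite hps !nTi_cat /=; lia.
have [b0 [bs [hbl hall]]] := decomp (s ++ p) hv.
have hw'b : w' = blocks (b0 :: bs) by rewrite /w' -cats1 catA hbl.
exists (size (rcons p T)), (map asum (b0 :: bs)).
rewrite hrot hw'b; split.
  rewrite size_map -nT_blocks // -hw'b /w' nT_cat -hT hps nT_cat.
  rewrite -cats1 nT_cat /=; lia.
have [_ H] := blocks_nf _ hall; apply: H.
have hsz' : size w = size (blocks (b0 :: bs)) by rewrite -hw'b -hrot size_rot.
rewrite -hsz'; apply: hmin; rewrite -ev_blocks // -hw'b //.
Qed.
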